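(* For every real $2\times n$ matrix $X$ there exists a real $2\times n$ matrix $Y$ with $\Delta_{i,j}(Y)\ge 0$ for all $1\le i<j\le n$ such that the multiset $\{\Delta_{i,j}(Y):1\le i<j\le n\}$ coincides with the multiset $\{|\Delta_{i,j}(X)|:1\le i<j\le n\}$.
   Context: For a real $2\times n$ matrix $X$ and $1\le i<j\le n$, $\Delta_{i,j}(X)$ is the determinant of the $2\times2$ submatrix formed by columns $i$ and $j$. *)

(* Defs.v *)
From mathcomp Require Import all_boot all_order all_algebra.
From mathcomp Require Import reals.
Set Implicit Arguments. Unset Strict Implicit. Unset Printing Implicit Defensive.
Import Order.TTheory GRing.Theory Num.Theory.
Local Open Scope ring_scope.

Definition minor2 (R : comPzRingType) (n : nat) (X : 'M[R]_(2, n)) (i j : 'I_n) : R :=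
  X ord0 i * X ord_max j - X ord0 j * X ord_max i.

Definition pairs_lt (n : nat) : seq ('I_n * 'I_n) :=
  [seq p <- enum [set: ('I_n * 'I_n)%type] | (nat_of_ord p.1 < nat_of_ord p.2)%N].

(* The multiset {Delta_{i,j}(X) : i < j}, as a sequence (compare with perm_eq). *)
Definition minors (R : comPzRingType) (n : nat) (X : 'M[R]_(2, n)) : seq R :=
  [seq minor2 X p.1 p.2 | p <- pairs_lt n].

(* Main.v *)
Require Import Defs.
From mathcomp Require Import all_boot all_order all_algebra.
From mathcomp Require Import reals.
From mathcomp Require Import ring lra.
Import Order.TTheory GRing.Theory Num.Theory.
Local Open Scope ring_scope.

Set Implicit Arguments.
Section Aux.
Variable R : realType.

Definition inH (a1 a2 : R) : bool := (0 < a2) || ((a2 == 0) && (0 <= a1)).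

Lemma trans_det (a1 a2 b1 b2 c1 c2 : R) :
  inH a1 a2 -> inH b1 b2 -> inH c1 c2 -> ~~ ((b1 == 0) && (b2 == 0)) ->
  0 <= a1 * b2 - b1 * a2 -> 0 <= b1 * c2 - c1 * b2 ->
  0 <= a1 * c2 - c1 * a2.
Proof.
rewrite /inH => /orP Ha /orP Hb /orP Hc Hb0 Hab Hbc.
have Ha2 : 0 <= a2 by case: Ha => [/ltW //| /andP[/eqP -> _]].
have Hc2 : 0 <= c2 by case: Hc => [/ltW //| /andP[/eqP -> _]].
case: Hb => [Hb2 | /andP[/eqP Hb2 Hb1]].
  have E : b2 * (a1 * c2 - c1 * a2) = (b1 * c2 - c1 * b2) * a2 + (a1 * b2 - b1 * a2) * c2 by ring.
  have : 0 <= b2 * (a1 * c2 - c1 * a2).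
    by rewrite E addr_ge0 // mulr_ge0.
  by rewrite pmulr_rge0.
subst b2.
have Hb1' : 0 < b1 by rewrite lt_neqAle Hb1 andbT; move: Hb0; rewrite eqxx andbT eq_sym.
have Ha20 : a2 = 0.
  apply/eqP; rewrite eq_le Ha2 andbT.
  have : 0 <= b1 * (- a2) by move: Hab; rewrite mulr0 sub0r mulrN.
  by rewrite pmulr_rge0 // oppr_ge0.
subst a2.
have Ha1 : 0 <= a1 by case: Ha => [|/andP[_ //]]; rewrite ltxx.
by rewrite mulr0 subr0 mulr_ge0.
Qed.
End Aux.
Arguments inH {R}.
Arguments trans_det {R} [a1 a2 b1 b2 c1 c2].

Section Main.
Variables (R : realType) (n : nat) (X : 'M[R]_(2, n)).

Let vx i := X ord0 i.
Let vy i := X ord_max i.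
Definition sg (i : 'I_n) : R := if inH (vx i) (vy i) then 1 else -1.
Definition ax i := sg i * vx i.
Definition ay i := sg i * vy i.
Definition isz i := (ax i == 0) && (ay i == 0).
Definition detA i j := ax i * ay j - ax j * ay i.

Lemma inH_a i : inH (ax i) (ay i).
Proof.
rewrite /ax /ay /sg; case: ifP => H; first by rewrite !mul1r.
move: H; rewrite /inH !mulN1r oppr_gt0 oppr_eq0 oppr_ge0 => /negbT.
rewrite negb_or negb_and -!ltNge => /andP[H1 H2].
case: (ltgtP (vy i) 0) H2 H1 => //= H3.
by move=> /ltW.
Qed.

Lemma sg_sq i : sg i * sg i = 1.
Proof. by rewrite /sg; case: ifP => _; rewrite ?mulr1 ?mulrNN ?mulr1. Qed.

Lemma detAE i j : detA i j = sg i * sg j * minor2 X i j.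
Proof. rewrite /detA /ax /ay /minor2 /vx /vy; ring. Qed.

Definition leR : rel 'I_n := fun i j => isz i || (~~ isz j && (0 <= detA i j)).

Lemma leR_total : total leR.
Proof.
move=> i j; rewrite /leR.
case: (isz i) => //=; case: (isz j) => //=.
have -> : detA j i = - detA i j by rewrite /detA; ring.
by rewrite oppr_ge0; apply/orP; case: (lerP 0 (detA i j)) => H; [left|right; apply: ltW].
Qed.

Lemma leR_trans : transitive leR.
Proof.
move=> j i k; rewrite /leR.
case Hi: (isz i) => //= /andP[Hj Hij].
rewrite (negbTE Hj) /= => /andP[Hk Hjk]; rewrite Hk /=.
exact: (trans_det (inH_a i) (inH_a j) (inH_a k) Hj Hij Hjk).
Qed.

Lemma leR_det i j : leR i j -> 0 <= detA i j.
Proof.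
rewrite /leR /isz => /orP[/andP[/eqP Ha /eqP Hb] | /andP[_ //]].
by rewrite /detA Ha Hb !mul0r mulr0 subrr.
Qed.

Lemma abs_detA i j : 0 <= detA i j -> detA i j = `|minor2 X i j|.
Proof.
move=> H; rewrite detAE in H *.
have Hs : (sg i * sg j = 1) \/ (sg i * sg j = -1).
  rewrite /sg; case: ifP => _; case: ifP => _.
  - by left; rewrite mulr1.
  - by right; rewrite mul1r.
  - by right; rewrite mulr1.
  - by left; rewrite mulrNN mulr1.
case: Hs => E; rewrite E in H *.
  by rewrite mul1r in H *; rewrite ger0_norm.
by rewrite mulN1r in H *; rewrite ler0_norm // -oppr_ge0.
Qed.

End Main.
Arguments sg {R n}.
Arguments ax {R n}.
Arguments ay {R n}.
Arguments isz {R n}.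
Arguments detA {R n}.
Arguments leR {R n}.
Arguments leR_total {R n}.
Arguments leR_trans {R n}.
Arguments leR_det {R n X i j}.
Arguments abs_detA {R n X i j}.

Lemma mem_pairs n (p : 'I_n * 'I_n) : (p \in pairs_lt n) = (p.1 < p.2)%N.
Proof. by rewrite /pairs_lt mem_filter mem_enum in_setT andbT. Qed.

Theorem mainTheorem7 (R : realType) (n : nat) (X : 'M[R]_(2, n)) :
  exists Y : 'M[R]_(2, n),
    (forall i j : 'I_n, (i < j)%N -> 0 <= minor2 Y i j) /\
    perm_eq (minors Y) [seq `|d| | d <- minors X].
Proof.
set s := sort (leR X) (enum 'I_n).
have Hsz : size s = n by rewrite size_sort size_enum_ord.
have Hu : uniq s by rewrite sort_uniq enum_uniq.
have Hpw : pairwise (leR X) s.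
  by rewrite -sorted_pairwise; [apply: sort_sorted; apply: leR_total | apply: leR_trans].
pose sig (k : 'I_n) : 'I_n := nth k s k.
have sigE (k l : 'I_n) : sig k = nth l s k by rewrite /sig (set_nth_default l) // Hsz.
have sig_inj : injective sig.
  move=> k l; rewrite (sigE k l) /sig => /eqP; rewrite nth_uniq ?Hsz // => /eqP.
  exact: val_inj.
have sig_le (k l : 'I_n) : (k < l)%N -> leR X (sig k) (sig l).
  move=> Hkl; move/(pairwiseP k): Hpw => P.
  rewrite (sigE l k) /sig; apply: P => //; rewrite inE Hsz //.
pose Y := \matrix_(r < 2, k < n) (if r == ord0 then ax X (sig k) else ay X (sig k)).
have YE k l : minor2 Y k l = detA X (sig k) (sig l) by rewrite /minor2 /detA !mxE.
exists Y; split.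
  move=> k l Hkl; rewrite YE; apply: leR_det; exact: sig_le.
have -> : minors Y = [seq `|minor2 X (sig p.1) (sig p.2)| | p <- pairs_lt n].
  rewrite /minors; apply/eq_in_map => p; rewrite mem_pairs => Hp.
  by rewrite YE abs_detA //; apply: leR_det; apply: sig_le.
pose f := fun p : 'I_n * 'I_n => `|minor2 X p.1 p.2|.
pose g (p : 'I_n * 'I_n) := if (sig p.1 < sig p.2)%N then (sig p.1, sig p.2) else (sig p.2, sig p.1).
have fsym i j : `|minor2 X i j| = `|minor2 X j i| by rewrite /minor2 -normrN opprB.
have -> : [seq `|minor2 X (sig p.1) (sig p.2)| | p <- pairs_lt n] = map f (map g (pairs_lt n)).
  by rewrite -map_comp; apply: eq_map => p; rewrite /f /g /=; case: ifP => //= _; apply: fsym.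
have -> : [seq `|d| | d <- minors X] = map f (pairs_lt n) by rewrite /minors -map_comp.
apply: perm_map.
have Hpu : uniq (pairs_lt n) by rewrite filter_uniq // enum_uniq.
have gin : {in pairs_lt n &, injective g}.
  move=> [a b] [c d]; rewrite !mem_pairs /= => Hab Hcd; rewrite /g /=.
  case: ifP => H1; case: ifP => H2 [E1 E2].
  - by rewrite (sig_inj _ _ E1) (sig_inj _ _ E2).
  - by move: Hab; rewrite (sig_inj _ _ E1) (sig_inj _ _ E2) => /(ltn_trans Hcd); rewrite ltnn.
  - by move: Hab; rewrite (sig_inj _ _ E1) (sig_inj _ _ E2) => /(ltn_trans Hcd); rewrite ltnn.
  - by rewrite (sig_inj _ _ E1) (sig_inj _ _ E2).
have Hmu : uniq (map g (pairs_lt n)) by rewrite map_inj_in_uniq.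
have Hsub : {subset map g (pairs_lt n) <= pairs_lt n}.
  move=> q /mapP [[a b] Hp ->]; move: Hp; rewrite !mem_pairs /g /= => Hab.
  case: ifP => //= /negbT; rewrite -leqNgt leq_eqVlt => /orP [/eqP E|//].
  by move: Hab; rewrite (sig_inj _ _ (val_inj E)) ltnn.
have Hsize : (size (pairs_lt n) <= size (map g (pairs_lt n)))%N by rewrite size_map.
have [_ H] := uniq_min_size Hmu Hsub Hsize.
by apply: uniq_perm.
Qed.
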